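(* Let $\mathbb{R}^n$ and $\mathbb{R}^m$ be equipped with arbitrary norms $\|\cdot\|$, with dual norms $\|\cdot\|_*$. Let $P:\mathbb{R}^n\to\mathbb{R}^m$ be differentiable on all of $\mathbb{R}^n$ with $\|P'(x^a)-P'(x^b)\|\le L\|x^a-x^b\|$ for all $x^a,x^b\in\mathbb{R}^n$ (some $L>0$), and suppose there is $\mu>0$ with $\|P'(x)^T h\|_*\ge\mu\|h\|_*$ for all $x\in\mathbb{R}^n$, $h\in\mathbb{R}^m$. Then for any $x^0\in\mathbb{R}^n$ the sequence generated by Algorithm 1 converges to a solution of $P(x)=0$.
   Context: For a vector $c$, the dual norm is $\|c\|_*=\sup_{\|x\|=1}(c,x)$; the norm of $P'(x)$ is the operator norm subordinate to the chosen vector norms. Algorithm 1 (Basic Newton method): starting from $x^0$, for $k\ge0$ let $z^k$ be any solution of $\min\{\|z\|: P'(x^k)z=P(x^k)\}$ and set $x^{k+1}=x^k-\min\{1,\frac{\mu^2}{L\|P(x^k)\|}\}z^k$ (with step $1$ and $z^k=0$ if $P(x^k)=0$). *)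

(* Defs.v *)
From HB Require Import structures.
From mathcomp Require Import all_boot all_order all_algebra.
From mathcomp Require Import all_classical all_reals all_analysis.
Set Implicit Arguments. Unset Strict Implicit. Unset Printing Implicit Defensive.
Import Order.TTheory GRing.Theory Num.Theory.
Import numFieldNormedType.Exports.
Local Open Scope classical_set_scope.
Local Open Scope ring_scope.

Definition is_norm (R : realType) (k : nat) (N : 'cV[R]_k -> R) : Prop :=
  [/\ forall x, N x = 0 -> x = 0,
      forall (a : R) x, N (a *: x) = `|a| * N x
    & forall x y, N (x + y) <= N x + N y].

Definition pairing (R : realType) (k : nat) (c x : 'cV[R]_k) : R :=
  (c^T *m x) ord0 ord0.

Definition dualn (R : realType) (k : nat) (N : 'cV[R]_k -> R) (c : 'cV[R]_k) : R :=
  sup [set pairing c x | x in [set x | N x = 1]].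

Definition opnorm (R : realType) (n m : nat) (Nn : 'cV[R]_n -> R)
  (Nm : 'cV[R]_m -> R) (A : 'M[R]_(m, n)) : R :=
  sup [set Nm (A *m x) | x in [set x | Nn x = 1]].

(* One step of Algorithm 1 (Basic Newton method) with derivative J. *)
Definition newton_step (R : realType) (n m : nat) (Nn : 'cV[R]_n -> R)
  (Nm : 'cV[R]_m -> R) (P : 'cV[R]_n -> 'cV[R]_m) (J : 'cV[R]_n -> 'M[R]_(m, n))
  (L mu : R) (xk zk xk1 : 'cV[R]_n) : Prop :=
  if P xk == 0 then zk = 0 /\ xk1 = xk - 1 *: zk
  else [/\ J xk *m zk = P xk,
           (forall z, J xk *m z = P xk -> Nn zk <= Nn z)
         & xk1 = xk - Num.min 1 (mu ^+ 2 / (L * Nm (P xk))) *: zk].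

(* Main.v *)
Require Import Defs.
From HB Require Import structures.
From mathcomp Require Import all_boot all_order all_algebra.
From mathcomp Require Import all_classical all_reals all_analysis.
From mathcomp Require Import ring lra.
Import Order.TTheory GRing.Theory Num.Theory.
Import numFieldNormedType.Exports.
Set Implicit Arguments. Unset Strict Implicit. Unset Printing Implicit Defensive.
Local Open Scope classical_set_scope.
Local Open Scope ring_scope.


Section Basic.
Variable R : realType.

Lemma mxnE a b (x : 'M[R]_(a, b)) : `|x| = \big[Num.max/0]_ij `|x ij.1 ij.2|.
Proof. exact: mx_normrE. Qed.

Lemma mx_entry_le a b (x : 'M[R]_(a, b)) i j : `|x i j| <= `|x|.
Proof.
rewrite mxnE (bigD1 (i, j)) //= le_max lexx //.
Qed.

Lemma mx_norm_le a b (x : 'M[R]_(a, b)) M : 0 <= M ->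
  (forall i j, `|x i j| <= M) -> `|x| <= M.
Proof.
move=> M0 H; rewrite mxnE; elim/big_ind: _ => //.
  by move=> u v hu hv; rewrite ge_max hu hv.
Qed.

Lemma trmx_norm a b (x : 'M[R]_(a, b)) : `|x^T| = `|x|.
Proof.
apply/le_anti/andP; split; apply: mx_norm_le => // i j; rewrite ?mxE.
  exact: mx_entry_le.
by have := mx_entry_le x^T j i; rewrite mxE.
Qed.
End Basic.


Section Pairing.
Variable R : realType.
Variable k : nat.
Implicit Types c x y : 'cV[R]_k.

Lemma pairingE c x : pairing c x = \sum_i c i ord0 * x i ord0.
Proof. by rewrite /pairing !mxE; apply: eq_bigr => i _; rewrite mxE. Qed.

Lemma pairingC c x : pairing c x = pairing x c.
Proof. by rewrite !pairingE; apply: eq_bigr => i _; rewrite mulrC. Qed.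

Lemma pairingDr c x y : pairing c (x + y) = pairing c x + pairing c y.
Proof. by rewrite !pairingE -big_split; apply: eq_bigr => i _; rewrite mxE mulrDr. Qed.

Lemma pairingZr c a x : pairing c (a *: x) = a * pairing c x.
Proof. by rewrite !pairingE mulr_sumr; apply: eq_bigr => i _; rewrite mxE mulrCA. Qed.

Lemma pairingNr c x : pairing c (- x) = - pairing c x.
Proof. by rewrite -scaleN1r pairingZr mulN1r. Qed.

Lemma pairingBr c x y : pairing c (x - y) = pairing c x - pairing c y.
Proof. by rewrite pairingDr pairingNr. Qed.

Lemma pairingDl c x y : pairing (x + y) c = pairing x c + pairing y c.
Proof. by rewrite ![pairing _ c]pairingC pairingDr. Qed.

Lemma pairingZl c a x : pairing (a *: x) c = a * pairing x c.
Proof. by rewrite ![pairing _ c]pairingC pairingZr. Qed.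

Lemma pairingBl c x y : pairing (x - y) c = pairing x c - pairing y c.
Proof. by rewrite ![pairing _ c]pairingC pairingBr. Qed.

Lemma pairing0r c : pairing c 0 = 0.
Proof. by rewrite -(scale0r 0) pairingZr mul0r. Qed.

Lemma pairing0l c : pairing 0 c = 0.
Proof. by rewrite pairingC pairing0r. Qed.

Lemma pairing_ge0 x : 0 <= pairing x x.
Proof. by rewrite pairingE; apply: sumr_ge0 => i _; rewrite -expr2 sqr_ge0. Qed.

Lemma pairing_eq0 x : pairing x x = 0 -> x = 0.
Proof.
rewrite pairingE => /eqP; rewrite psumr_eq0; last by move=> i _; rewrite -expr2 sqr_ge0.
move=> /allP H; apply/matrixP => i j; rewrite (ord1 j) mxE.
have := H i (mem_index_enum _); rewrite /= mulf_eq0 orbb => /eqP ->; done.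
Qed.

Lemma pairing_bound c x : `|pairing c x| <= k%:R * (`|c| * `|x|).
Proof.
rewrite pairingE (le_trans (ler_norm_sum _ _ _)) //.
rewrite -[k in k%:R]card_ord -sumr_const mulr_suml; apply: ler_sum => i _.
by rewrite normrM mul1r ler_pM // mx_entry_le.
Qed.

End Pairing.

Lemma pairing_mul (R : realType) n m (A : 'M[R]_(m, n)) h x :
  pairing (A^T *m h) x = pairing h (A *m x).
Proof. by rewrite /pairing trmx_mul trmxK mulmxA. Qed.


Lemma lip_cont (R : realType) (V : normedModType R) (f : V -> R) (C : R) :
  0 <= C -> (forall x y, `|f x - f y| <= C * `|x - y|) -> continuous f.
Proof.
move=> C0 H x; apply/cvgrPdist_lt => e e0.
have e1 : 0 < e / (C + 1) by rewrite divr_gt0 // ltr_wpDl.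
near=> y.
have hy : `|x - y| < e / (C + 1) by near: y; by apply: cvgr_dist_lt.
apply: (le_lt_trans (H x y)).
apply: (le_lt_trans (ler_wpM2l C0 (ltW hy))).
have C1 : 0 < C + 1 by lra.
rewrite mulrA ltr_pdivrMr // mulrC ltr_pM2l //; lra.
Unshelve. all: by end_near. Qed.

Section Norm.
Variable R : realType.
Variable k : nat.
Variable N : 'cV[R]_k -> R.
Hypothesis HN : is_norm N.

Lemma NZ a x : N (a *: x) = `|a| * N x.
Proof. by have [_ h _] := HN. Qed.

Lemma NT x y : N (x + y) <= N x + N y.
Proof. by have [_ _ h] := HN. Qed.

Lemma N0eq x : N x = 0 -> x = 0.
Proof. by have [h _ _] := HN; exact: h. Qed.

Lemma N0 : N 0 = 0.
Proof. by rewrite -(scale0r 0) NZ normr0 mul0r. Qed.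

Lemma NN x : N (- x) = N x.
Proof. by rewrite -scaleN1r NZ normrN normr1 mul1r. Qed.

Lemma N_ge0 x : 0 <= N x.
Proof. have := NT x (- x); rewrite subrr N0 NN; lra. Qed.

Lemma NB_le x y : `|N x - N y| <= N (x - y).
Proof.
rewrite ler_norml; apply/andP; split.
  have := NT (y - x) x; rewrite subrK -(NN (y - x)) opprB; lra.
have := NT (x - y) y; rewrite subrK; lra.
Qed.

Lemma N_sum (I : Type) (r : seq I) (F : I -> 'cV[R]_k) :
  N (\sum_(i <- r) F i) <= \sum_(i <- r) N (F i).
Proof.
elim/big_rec2: _; first by rewrite N0.
by move=> i y1 y2 _ H; apply: le_trans (NT _ _) _; rewrite lerD2l.
Qed.

Lemma N_upper : exists2 C, 0 < C & forall x, N x <= C * `|x|.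
Proof.
exists (\sum_i N (delta_mx i ord0) + 1).
  by rewrite ltr_wpDl // sumr_ge0 // => i _; exact: N_ge0.
move=> x.
have E : x = \sum_i x i ord0 *: delta_mx i ord0.
  by rewrite {1}(matrix_sum_delta x); apply: eq_bigr => i _; rewrite big_ord1.
rewrite [in N x]E; apply: le_trans (N_sum _ _) _.
have nx0 : 0 <= `|x| by [].
rewrite mulrDl mul1r mulr_suml -[X in X <= _]addr0; apply: lerD => //.
apply: ler_sum => i _; rewrite NZ mulrC ler_wpM2l ?N_ge0 //.
exact: mx_entry_le.
Qed.
End Norm.

Lemma rV_compact_of (R : realType) k (A : set 'rV[R]_k) M :
  A !=set0 -> (forall v, A v -> `|v| <= M) -> closed A -> compact A.
Proof.
move=> [a Aa] HM Acl; apply: bounded_closed_compact => //.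
have PF := globally_properfilter Aa.
apply/ex_bound; exists M => v Av; exact: HM.
Qed.

Section Norm2.
Variable R : realType.
Variable k : nat.
Variable N : 'cV[R]_k -> R.
Hypothesis HN : is_norm N.

Lemma N_cont : continuous N.
Proof.
have [C C0 HC] := N_upper HN.
apply: (@lip_cont _ _ _ C (ltW C0)) => x y.
exact: le_trans (NB_le HN x y) (HC _).
Qed.

Lemma NT_cont : continuous (fun v : 'rV[R]_k => N v^T).
Proof.
have [C C0 HC] := N_upper HN.
apply: (@lip_cont _ _ _ C (ltW C0)) => x y.
apply: le_trans (NB_le HN _ _) _.
by rewrite -linearB /= -(trmx_norm (x - y)); exact: HC.
Qed.

Lemma N_lower : exists2 c, 0 < c & forall x, c * `|x| <= N x.
Proof.
pose S := [set v : 'rV[R]_k | `|v| = 1].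
have Sn x : x != 0 -> S (`|x|^-1 *: x)^T.
  move=> x0; rewrite /S /= trmx_norm normrZ normfV normr_id mulVf //.
  by rewrite normr_eq0.
case: (pselect (S !=set0)) => [S0|S0]; last first.
  exists 1 => // x; case: (eqVneq x 0) => [->|x0]; first by rewrite normr0 mulr0 N_ge0.
  by exfalso; apply: S0; exists (`|x|^-1 *: x)^T; exact: Sn.
have cS : compact S.
  apply: (@rV_compact_of _ _ _ 1 S0); first by move=> v ->.
  have cl : closed ((fun v : 'rV[R]_k => `|v|) @^-1` [set (1:R)]).
    apply: preimage_closed; [move=> ? _; exact: norm_continuous | exact: closed_eq].
  exact: cl.
have [v0 v0S Hv0] := compact_EVT_min S0 cS (continuous_subspaceT NT_cont).
move: v0S; rewrite inE /S /= => v01.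
exists (N v0^T).
  rewrite lt_def N_ge0 // andbT; apply/eqP => /(N0eq HN) /eqP.
  by rewrite trmx_eq0 => /eqP v00; move: v01; rewrite v00 normr0; lra.
move=> x; case: (eqVneq x 0) => [->|x0]; first by rewrite normr0 mulr0 N_ge0.
have := Hv0 _ (mem_set (Sn x x0)); rewrite trmxK NZ // normfV normr_id.
have nx : 0 < `|x| by rewrite normr_gt0.
by rewrite ler_pdivlMl // mulrC.
Qed.

End Norm2.


Lemma loclip_cont (R : realType) (V W : normedModType R) (f : V -> W) :
  (forall x, exists2 C, 0 <= C & forall y, `|x - y| <= 1 -> `|f x - f y| <= C * `|x - y|) ->
  continuous f.
Proof.
move=> H x; have [C C0 HC] := H x; apply/cvgrPdist_lt => e e0.
have C1 : 0 < C + 1 by lra.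
have e1 : 0 < Num.min 1 (e / (C + 1)) by rewrite lt_min ltr01 divr_gt0.
near=> y.
have hy : `|x - y| < Num.min 1 (e / (C + 1)) by near: y; by apply: cvgr_dist_lt.
move: hy; rewrite lt_min => /andP[hy1 hy2].
apply: (le_lt_trans (HC y (ltW hy1))).
apply: (le_lt_trans (ler_wpM2l C0 (ltW hy2))).
rewrite mulrA ltr_pdivrMr // mulrC ltr_pM2l //; lra.
Unshelve. all: by end_near. Qed.

Lemma mulmx_norm (R : realType) m n p (A : 'M[R]_(m, n)) (x : 'M[R]_(n, p)) :
  `|A *m x| <= n%:R * (`|A| * `|x|).
Proof.
apply: mx_norm_le => [|i j]; first by rewrite mulr_ge0 // mulr_ge0.
rewrite mxE (le_trans (ler_norm_sum _ _ _)) //.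
rewrite -[n in n%:R]card_ord -sumr_const mulr_suml; apply: ler_sum => l _.
by rewrite normrM mul1r ler_pM // mx_entry_le.
Qed.

Lemma sup_le0 (R : realType) (A : set R) u : ubound A u -> 0 <= u -> sup A <= u.
Proof.
move=> Hu u0; case: (pselect (A !=set0)) => [A0|A0]; first exact: ge_sup.
have -> : A = set0 by apply/seteqP; split => // a Aa; apply: A0; exists a.
by rewrite sup0.
Qed.

Section Dual.
Variable R : realType.
Variable k : nat.
Variable N : 'cV[R]_k -> R.
Hypothesis HN : is_norm N.

Lemma dual_bound c x : pairing c x <= dualn N c * N x.
Proof.
case: (eqVneq x 0) => [->|x0]; first by rewrite pairing0r N0 // mulr0.
have Nx : 0 < N x by rewrite lt_def N_ge0 // andbT; apply/eqP => /(N0eq HN); apply/eqP.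
pose y := (N x)^-1 *: x.
have Ny : N y = 1 by rewrite /y NZ // normfV gtr0_norm // mulVf // gt_eqF.
have [cl cl0 Hcl] := N_lower HN.
have hs : has_sup [set pairing c x0 | x0 in [set x1 | N x1 = 1]].
  split; first by exists (pairing c y); exists y.
  exists (k%:R * (`|c| * cl^-1)) => _ [w /= Nw <-].
  apply: le_trans (ler_norm _) _; apply: le_trans (pairing_bound _ _) _.
  rewrite ler_wpM2l // ler_wpM2l // -(div1r cl) ler_pdivlMr // mulrC -Nw; exact: Hcl.
have := sup_upper_bound hs (ex_intro2 _ _ y Ny erefl).
rewrite /y pairingZr -/(dualn N c) ler_pdivrMl // mulrC; done.
Qed.

End Dual.

Lemma opnorm_bound (R : realType) n m (Nn : 'cV[R]_n -> R) (Nm : 'cV[R]_m -> R)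
  (HNn : is_norm Nn) (HNm : is_norm Nm) (A : 'M[R]_(m, n)) x :
  Nm (A *m x) <= opnorm Nn Nm A * Nn x.
Proof.
case: (eqVneq x 0) => [->|x0]; first by rewrite mulmx0 !N0 // mulr0.
have Nx : 0 < Nn x by rewrite lt_def N_ge0 // andbT; apply/eqP => /(N0eq HNn); apply/eqP.
pose y := (Nn x)^-1 *: x.
have Ny : Nn y = 1 by rewrite /y NZ // normfV gtr0_norm // mulVf // gt_eqF.
have [cl cl0 Hcl] := N_lower HNn.
have [C C0 HC] := N_upper HNm.
have hs : has_sup [set Nm (A *m x0) | x0 in [set x1 | Nn x1 = 1]].
  split; first by exists (Nm (A *m y)); exists y.
  exists (C * (n%:R * (`|A| * cl^-1))) => _ [w /= Nw <-].
  idtac.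
  apply: (le_trans (HC (A *m w))); apply: ler_wpM2l; first exact: ltW.
  apply: le_trans (mulmx_norm _ _) _.
  rewrite ler_wpM2l // ler_wpM2l // -(div1r cl) ler_pdivlMr // mulrC -Nw; exact: Hcl.
have := sup_upper_bound hs (ex_intro2 _ _ y Ny erefl).
rewrite /y -scalemxAr NZ // normfV gtr0_norm // -/(opnorm Nn Nm A) ler_pdivrMl // mulrC; done.
Qed.


Lemma pairing_cont (R : realType) m : continuous (fun u : 'cV[R]_m => pairing u u).
Proof.
apply: loclip_cont => x; exists (m%:R * (2 * `|x| + 1)).
  by rewrite mulr_ge0 // addr_ge0 // mulr_ge0.
move=> y hy.
have -> : pairing x x - pairing y y = pairing (x - y) (x + y).
  rewrite pairingDr !pairingBl (pairingC y x); ring.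
apply: le_trans (pairing_bound _ _) _.
rewrite -mulrA ler_wpM2l // mulrC ler_wpM2r //.
have : `|x + y| <= `|x| + `|y| by exact: ler_normD.
have : `|y| <= `|x| + `|x - y|.
  by have := ler_normD x (y - x); rewrite addrC subrK -opprB normrN.
lra.
Qed.

Lemma pairing_expand (R : realType) m (u w : 'cV[R]_m) t :
  pairing (u - t *: w) (u - t *: w) =
  pairing u u - 2 * t * pairing u w + t ^+ 2 * pairing w w.
Proof.
rewrite !pairingBl !pairingBr !pairingZl !pairingZr (pairingC w u); ring.
Qed.

Section Sep.
Variable R : realType.
Variables n m : nat.
Variable Nn : 'cV[R]_n -> R.
Hypothesis HNn : is_norm Nn.

Lemma separation (A : 'M[R]_(m, n)) (b : 'cV[R]_m) :
  (forall z, Nn z <= 1 -> A *m z != b) ->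
  exists h, 0 < pairing h h /\
    forall z, Nn z <= 1 -> pairing h (A *m z) + pairing h h <= pairing h b.
Proof.
move=> Hb.
pose K := [set v : 'rV[R]_n | Nn v^T <= 1].
have K0 : K !=set0 by exists 0; rewrite /K /= trmx0 N0 // ler01.
have [cl cl0 Hcl] := N_lower HNn.
have cK : compact K.
  apply: (@rV_compact_of _ _ _ cl^-1 K0).
    move=> v Kv; rewrite -trmx_norm -(div1r cl) ler_pdivlMr // mulrC.
    exact: le_trans (Hcl _) Kv.
  have cl1 : closed ((fun v : 'rV[R]_n => Nn v^T) @^-1` [set x | x <= (1:R)]).
    apply: preimage_closed; [move=> ? _; exact: NT_cont | exact: closed_le].
  exact: cl1.
pose f := fun v : 'rV[R]_n => pairing (b - A *m v^T) (b - A *m v^T).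
have fc : continuous f.
  move=> v; apply: (continuous_comp (f := fun v : 'rV[R]_n => b - A *m v^T)
                                   (g := fun u => pairing u u)); last exact: pairing_cont.
  apply: loclip_cont => x; exists (n%:R * `|A|); first by rewrite mulr_ge0.
  move=> y _; rewrite opprB addrC addrA subrK -mulmxBr -linearB /=.
  by rewrite distrC -(trmx_norm (y - x)) -mulrA; exact: mulmx_norm.
have [v0 v0K Hv0] := compact_EVT_min K0 cK (continuous_subspaceT fc).
move: v0K; rewrite inE /K /= => Kv0.
pose z0 := v0^T; pose p := A *m z0; pose h := b - p.
have hh0 : 0 < pairing h h.
  rewrite lt_def pairing_ge0 andbT; apply/eqP => /pairing_eq0 /eqP.
  by rewrite subr_eq0 eq_sym; apply/negP; exact: Hb.
exists h; split => // z Nz.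
pose w := A *m z - p; pose d := pairing h w; pose q := pairing w w.
suff d0 : d <= 0.
  have -> : pairing h b = pairing h h + pairing h p by rewrite -pairingDr subrK.
  have : pairing h (A *m z) = d + pairing h p by rewrite -pairingDr subrK.
  lra.
have Ht t : 0 <= t <= 1 -> 2 * t * d <= t ^+ 2 * q.
  case/andP=> t0 t1.
  have Kt : K (z0 + t *: (z - z0))^T.
    rewrite /K /= trmxK.
    have -> : z0 + t *: (z - z0) = (1 - t) *: z0 + t *: z.
      by rewrite scalerBr scalerBl scale1r addrA addrC addrA [- _ + _]addrC.
    apply: le_trans (NT HNn _ _) _; rewrite !NZ // !ger0_norm ?subr_ge0 //.
    have : Nn z0 <= 1 by [].
    nra.
  have := Hv0 _ (mem_set Kt); rewrite /f trmxK.
  have -> : b - A *m (z0 + t *: (z - z0)) = h - t *: w.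
    by rewrite mulmxDr -scalemxAr mulmxBr /h /w /p opprD addrA.
  rewrite pairing_expand -/d -/q.
  lra.
have := Ht 1; rewrite ler01 lexx /= mulr1 expr1n mul1r => /(_ isT) Hq.
case: (lerP d 0) => // d0; exfalso.
have q0 : 0 < q by lra.
have dq1 : d / q <= 1 by rewrite ler_pdivrMr // mul1r; lra.
have := Ht (d / q) (introT andP (conj (divr_ge0 (ltW d0) (ltW q0)) dq1)).
have -> : (d / q) ^+ 2 * q = d * (d / q).
  by field; rewrite gt_eqF.
have : 0 < d * (d / q) by rewrite mulr_gt0 // divr_gt0.
move=> H1 H2; nra.
Qed.
End Sep.


Section DualSep.
Variable R : realType.
Variable k : nat.
Variable N : 'cV[R]_k -> R.
Hypothesis HN : is_norm N.

Lemma dual_sep y : 1 < N y -> exists c, dualn N c <= 1 /\ 1 < pairing c y.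
Proof.
move=> Ny.
have Hb : forall z, N z <= 1 -> (1%:M : 'M[R]_k) *m z != y.
  by move=> z Nz; rewrite mul1mx; apply/eqP => zy; move: Nz; rewrite zy; lra.
have [h [hh H]] := separation HN Hb.
have H' z : N z <= 1 -> pairing h z + pairing h h <= pairing h y.
  by move=> /H; rewrite mul1mx.
pose s := pairing h y - pairing h h.
have h0 : h != 0 by apply/eqP => h0; move: hh; rewrite h0 pairing0r ltxx.
have Nh : 0 < N h by rewrite lt_def N_ge0 // andbT; apply/eqP => /(N0eq HN); apply/eqP.
have s0 : 0 < s.
  have := H' ((N h)^-1 *: h); rewrite NZ // normfV gtr0_norm // mulVf ?gt_eqF // lexx.
  rewrite pairingZr => /(_ isT).
  have : 0 < (N h)^-1 * pairing h h by rewrite mulr_gt0 // invr_gt0.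
  rewrite /s; lra.
exists (s^-1 *: h); split.
  apply: sup_le0 => //; move=> _ [x /= Nx <-].
  rewrite pairingZl ler_pdivrMl // mulr1.
  have := H' x; rewrite Nx lexx => /(_ isT); rewrite /s; lra.
rewrite pairingZl ltr_pdivlMl // mulr1 /s; lra.
Qed.

Lemma norm_dual y M : 0 <= M -> (forall c, dualn N c <= 1 -> pairing c y <= M) -> N y <= M.
Proof.
move=> M0 H; case: (lerP (N y) M) => // NyM; exfalso.
pose M' := (M + N y) / 2.
have M'0 : 0 < M' by rewrite /M'; lra.
have : 1 < N (M'^-1 *: y).
  rewrite NZ // gtr0_norm ?invr_gt0 // -[1](@mulVf _ M') ?gt_eqF //.
  rewrite ltr_pM2l ?invr_gt0 // /M'; lra.
move=> /dual_sep [c [c1 cy]].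
have := H c c1; move: cy; rewrite pairingZr ltr_pdivlMl // mulr1 /M'; lra.
Qed.

End DualSep.

Lemma solve_bound (R : realType) n m (Nn : 'cV[R]_n -> R) (Nm : 'cV[R]_m -> R)
  (HNn : is_norm Nn) (HNm : is_norm Nm) (A : 'M[R]_(m, n)) (mu : R) :
  0 < mu -> (forall h, mu * dualn Nm h <= dualn Nn (A^T *m h)) ->
  forall b, exists2 z, A *m z = b & Nn z <= Nm b / mu.
Proof.
move=> mu0 Hmu b; case: (eqVneq b 0) => [->|b0].
  by exists 0; rewrite ?mulmx0 // !N0 // mul0r.
have Nb : 0 < Nm b by rewrite lt_def N_ge0 // andbT; apply/eqP => /(N0eq HNm); apply/eqP.
pose b' := (mu / Nm b) *: b.
suff [z' Nz' Az'] : exists2 z', Nn z' <= 1 & A *m z' = b'.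
  exists ((Nm b / mu) *: z').
    rewrite -scalemxAr Az' /b' scalerA (_ : _ * _ = 1) ?scale1r //.
    by field; rewrite !gt_eqF.
  rewrite NZ // gtr0_norm ?divr_gt0 // -[X in _ <= X]mulr1 ler_wpM2l // ltW // divr_gt0 //.
apply: contrapT => Hn.
have Hb : forall z, Nn z <= 1 -> A *m z != b'.
  by move=> z Nz; apply/eqP => Az; apply: Hn; exists z.
have [h [hh H]] := separation HNn Hb.
have s0 : 0 <= pairing h b' - pairing h h.
  have := H 0; rewrite N0 // ler01 mulmx0 pairing0r => /(_ isT); lra.
have d1 : dualn Nn (A^T *m h) <= pairing h b' - pairing h h.
  apply: sup_le0 => //; move=> _ [x /= Nx <-].
  rewrite pairing_mul; have := H x; rewrite Nx lexx => /(_ isT); lra.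
have d2 : pairing h b' <= dualn Nm h * mu.
  apply: le_trans (dual_bound HNm h b') _.
  rewrite /b' NZ // gtr0_norm ?divr_gt0 // (_ : mu / Nm b * Nm b = mu) //.
  by field; rewrite gt_eqF.
have := Hmu h; lra.
Qed.


Section Line.
Variable R : realType.
Variables (V W : normedModType R).

Lemma line_deriveE (f : V -> W) a v t :
  'D_1 (fun s : R => f (s *: v + a)) t = 'D_v f (t *: v + a).
Proof.
rewrite /derive.
have -> : (fun h : R => h^-1 *: (((fun s : R => f (s *: v + a)) \o shift t) (h *: 1) - f (t *: v + a)))
  = (fun h : R => h^-1 *: ((f \o shift (t *: v + a)) (h *: v) - f (t *: v + a))).
  by apply: funext => h /=; rewrite /shift /= scalerDl [_%:A]mulr1 addrA.
by [].
Qed.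

Lemma line_derivable (f : V -> W) a v t :
  derivable f (t *: v + a) v -> derivable (fun s : R => f (s *: v + a)) t 1.
Proof.
rewrite /derivable.
have -> : (fun h : R => h^-1 *: (((fun s : R => f (s *: v + a)) \o shift t) (h *: 1) - f (t *: v + a)))
  = (fun h : R => h^-1 *: ((f \o shift (t *: v + a)) (h *: v) - f (t *: v + a))).
  by apply: funext => h /=; rewrite /shift /= scalerDl [_%:A]mulr1 addrA.
by [].
Qed.
End Line.

Section PairLine.
Variable R : realType.
Variables n m : nat.

Lemma pairing_linear (c : 'cV[R]_m) : linear (fun x : 'cV[R]_m => (pairing c x : R^o)).
Proof. by move=> a u v; rewrite pairingDr pairingZr. Qed.

Lemma pairing_cont1 (c : 'cV[R]_m) : continuous (fun x : 'cV[R]_m => (pairing c x : R^o)).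
Proof.
apply: loclip_cont => x; exists (m%:R * `|c|); first by rewrite mulr_ge0.
by move=> y _; rewrite -pairingBr -mulrA; exact: pairing_bound.
Qed.

Lemma pair_line_derive (P : 'cV[R]_n -> 'cV[R]_m) (J : 'cV[R]_n -> 'M[R]_(m, n))
  (hP : forall y, differentiable P y /\ forall h, 'd P y h = J y *m h) c x d t :
  derivable (fun s : R => (pairing c (P (s *: d + x)) : R^o)) t 1 /\
  derive1 (fun s : R => (pairing c (P (s *: d + x)) : R^o)) t = pairing c (J (t *: d + x) *m d).
Proof.
pose g := fun s : R => P (s *: d + x).
have dg : derivable g t 1 by apply: line_derivable; apply: diff_derivable; exact: (hP _).1.
have gdiff : differentiable g t by apply/derivable1_diffP.
pose pcM := GRing.isLinear.Build _ _ _ _ _ (pairing_linear c).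
pose pcL : {linear 'cV[R]_m -> R^o} := HB.pack (fun x : 'cV[R]_m => (pairing c x : R^o)) pcM.
have pcc : continuous pcL by exact: pairing_cont1.
have -> : (fun s : R => (pairing c (P (s *: d + x)) : R^o)) = pcL \o g by [].
have phid : differentiable (pcL \o g) t.
  by apply: differentiable_comp => //; exact: linear_differentiable.
split; first by apply/derivable1_diffP.
rewrite derive1E deriveE // diff_comp //; last exact: linear_differentiable.
rewrite diff_lin //= -deriveE // /g line_deriveE deriveE; last exact: (hP _).1.
by rewrite (hP _).2.
Qed.
End PairLine.


Lemma taylor (R : realType) n m (Nn : 'cV[R]_n -> R) (Nm : 'cV[R]_m -> R)
  (HNn : is_norm Nn) (HNm : is_norm Nm)
  (P : 'cV[R]_n -> 'cV[R]_m) (J : 'cV[R]_n -> 'M[R]_(m, n)) (L : R)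
  (hP : forall y, differentiable P y /\ forall h, 'd P y h = J y *m h)
  (L0 : 0 <= L)
  (hL : forall xa xb, opnorm Nn Nm (J xa - J xb) <= L * Nn (xa - xb)) x d :
  Nm (P (x + d) - P x - J x *m d) <= L * Nn d ^+ 2 / 2.
Proof.
have Nd0 := N_ge0 HNn d.
apply: (norm_dual HNm); first by rewrite divr_ge0 // mulr_ge0 // exprn_ge0.
move=> c c1.
pose M := L * Nn d ^+ 2 / 2.
pose a := pairing c (J x *m d).
pose phi0 := fun s : R => (pairing c (P (s *: d + x)) : R^o).
pose psi := (phi0 - a \*: (id : R -> R^o) - M \*: ((id : R -> R^o) * id)) : R -> R^o.
have dpsi (s : R) : is_derive s (1 : R) psi (pairing c (J (s *: d + x) *m d) - a *: 1 - M *: (s *: 1 + s *: 1)).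
  have [h1 h2] := pair_line_derive hP c x d s.
  have h0 : is_derive s 1 phi0 (pairing c (J (s *: d + x) *m d)).
    by apply: DeriveDef => //; rewrite -derive1E.
  apply: is_deriveB; apply: is_deriveZ; exact: is_deriveM.
have psiE (s : R) : psi s = pairing c (P (s *: d + x)) - a * s - M * (s * s) by [].
have hmono : {in `[0, 1]%R &, {homo psi : u v /~ u <= v}}.
  apply: ler0_derive1_le_cc.
  - by move=> s _; exact: (@ex_derive _ _ _ _ _ _ _ (dpsi s)).
  - move=> s; rewrite in_itv /= => /andP[s0 s1].
    rewrite derive1E (@derive_val _ _ _ _ _ _ _ (dpsi s)).
    change (pairing c (J (s *: d + x) *m d) - a * 1 - M * (s * 1 + s * 1) <= 0).
    pose y := (J (s *: d + x) - J x) *m d.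
    have e1 : pairing c (J (s *: d + x) *m d) - a = pairing c y by rewrite /y mulmxBl pairingBr.
    have e2 := dual_bound HNm c y.
    have e3 := opnorm_bound HNn HNm (J (s *: d + x) - J x) d.
    have e4 := hL (s *: d + x) x; rewrite addrK NZ // ger0_norm in e4; last exact: ltW.
    have Ny0 := N_ge0 HNm y.
    have e5 : dualn Nm c * Nm y <= Nm y by rewrite ler_piMl.
    have e6 : opnorm Nn Nm (J (s *: d + x) - J x) * Nn d <= L * (s * Nn d) * Nn d.
      exact: ler_wpM2r.
    have -> : M * (s * 1 + s * 1) = L * (s * Nn d) * Nn d by rewrite /M; field.
    rewrite !mulr1; lra.
  - apply: derivable_within_continuous => s _.
    exact: (@ex_derive _ _ _ _ _ _ _ (dpsi s)).
have := hmono 1 0; rewrite !in_itv /= !lexx ler01 /= => /(_ isT isT isT).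
rewrite !psiE scale0r add0r scale1r addrC !pairingBr -/a -/M.
rewrite (addrC d x); lra.
Qed.


Lemma zmod_id (V : zmodType) (a b c : V) : a = a - b + c + (b - c).
Proof. by rewrite -addrA [c + _]addrC subrK subrK. Qed.

Lemma newton_one (R : realType) (n m : nat)
  (Nn : 'cV[R]_n -> R) (Nm : 'cV[R]_m -> R)
  (P : 'cV[R]_n -> 'cV[R]_m) (J : 'cV[R]_n -> 'M[R]_(m, n)) (L mu : R) :
  is_norm Nn -> is_norm Nm ->
  (forall x, differentiable P x /\ forall h, 'd P x h = J x *m h) ->
  0 < L ->
  (forall xa xb, opnorm Nn Nm (J xa - J xb) <= L * Nn (xa - xb)) ->
  0 < mu ->
  (forall x h, mu * dualn Nm h <= dualn Nn ((J x)^T *m h)) ->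
  forall xk zk xk1, newton_step Nn Nm P J L mu xk zk xk1 ->
  let g := if P xk == 0 then 1 else Num.min 1 (mu ^+ 2 / (L * Nm (P xk))) in
  [/\ 0 <= g, Nm (P xk1) <= Nm (P xk) - g * Nm (P xk) / 2
    & Nn (xk1 - xk) <= g * Nm (P xk) / mu].
Proof.
move=> HNn HNm hP L0 hL mu0 hmu xk zk xk1; rewrite /newton_step.
case: eqP => [P0 [-> ->] | /eqP P0 [Jz zmin ->]] /=.
  rewrite scaler0 subr0 subrr P0 !N0 // !mulr0 !mul0r subr0; split => //; exact: ler01.
set g := Num.min 1 _.
have a0 : 0 < Nm (P xk) by rewrite lt_def N_ge0 // andbT; apply/eqP => /(N0eq HNm); apply/eqP.
have [z' Jz' Nz'] := solve_bound HNn HNm mu0 (hmu xk) (P xk).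
have Nz : Nn zk <= Nm (P xk) / mu by apply: le_trans (zmin _ Jz') Nz'.
have g0 : 0 < g by rewrite /g lt_min ltr01 divr_gt0 // ?exprn_gt0 // mulr_gt0.
have g1 : g <= 1 by rewrite /g ge_min lexx.
have gL : g * (L * Nm (P xk)) <= mu ^+ 2.
  by rewrite -ler_pdivlMr ?mulr_gt0 // /g ge_min lexx orbT.
have Nz0 := N_ge0 HNn zk.
split; first exact: ltW.
- have T := taylor HNn HNm hP (ltW L0) hL xk (- (g *: zk)).
  have E2 : J xk *m - (g *: zk) = - (g *: P xk) by rewrite mulmxN -scalemxAr Jz.
  rewrite E2 opprK in T.
  have -> : P (xk - g *: zk) = (P (xk - g *: zk) - P xk + g *: P xk) + (1 - g) *: P xk.
    by rewrite scalerBl scale1r -zmod_id.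
  apply: le_trans (NT HNm _ _) _.
  rewrite NN // NZ // gtr0_norm // in T.
  rewrite NZ // ger0_norm ?subr_ge0 //.
  have : Nn zk ^+ 2 <= (Nm (P xk) / mu) ^+ 2 by rewrite lerXn2r // ?nnegrE // divr_ge0 // ltW.
  move=> Hz.
  have H1 : L * g * Nn zk ^+ 2 <= L * g * (Nm (P xk) / mu) ^+ 2.
    by rewrite ler_wpM2l // mulr_ge0 // ltW.
  have H2 : L * g * (Nm (P xk) / mu) ^+ 2 <= Nm (P xk).
    rewrite expr_div_n mulrA ler_pdivrMr ?exprn_gt0 //.
    have : Nm (P xk) * (g * (L * Nm (P xk))) <= Nm (P xk) * mu ^+ 2 by rewrite ler_wpM2l // ltW.
    by rewrite expr2; lra.
  have H3 : g * (L * g * Nn zk ^+ 2) <= g * Nm (P xk).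
    by rewrite ler_wpM2l ?(ltW g0) //; exact: le_trans H1 H2.
  rewrite exprMn in T.
  nra.
- rewrite addrAC subrr add0r NN // NZ // gtr0_norm // -mulrA.
  by apply: ler_wpM2l => //; exact: ltW.
Qed.


Unset Implicit Arguments.

Theorem corollary4 (R : realType) (n m : nat)
  (Nn : 'cV[R]_n -> R) (Nm : 'cV[R]_m -> R)
  (P : 'cV[R]_n -> 'cV[R]_m) (J : 'cV[R]_n -> 'M[R]_(m, n)) (L mu : R) :
  is_norm Nn -> is_norm Nm ->
  (forall x, differentiable P x /\ forall h, 'd P x h = J x *m h) ->
  0 < L ->
  (forall xa xb, opnorm Nn Nm (J xa - J xb) <= L * Nn (xa - xb)) ->
  0 < mu ->
  (forall x h, mu * dualn Nm h <= dualn Nn ((J x)^T *m h)) ->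
  forall (x z : nat -> 'cV[R]_n),
    (forall k, newton_step Nn Nm P J L mu (x k) (z k) (x k.+1)) ->
    exists xs : 'cV[R]_n, x @ \oo --> xs /\ P xs = 0.
Proof.
move=> HNn HNm hP L0 hL mu0 hmu x z hstep.
pose a k := Nm (P (x k)).
pose g k := if P (x k) == 0 then 1 else Num.min 1 (mu ^+ 2 / (L * a k)).
have step k : [/\ 0 <= g k, a k.+1 <= a k - g k * a k / 2
    & Nn (x k.+1 - x k) <= g k * a k / mu].
  exact: (newton_one HNn HNm hP L0 hL mu0 hmu (hstep k)).
have a0 k : 0 <= a k by exact: N_ge0.
have adec k : a k.+1 <= a k.
  have [g0 h1 _] := step k; have := mulr_ge0 g0 (a0 k); lra.
have ale k : a k <= a 0.
  elim: k => [|k IH]; first exact: lexx.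
  exact: le_trans (adec k) IH.
pose gb := Num.min 1 (mu ^+ 2 / (L * (a 0 + 1))).
have a01 : 0 < a 0 + 1 by have := a0 0; lra.
have gb0 : 0 < gb by rewrite lt_min ltr01 divr_gt0 // ?exprn_gt0 // mulr_gt0.
have gb1 : gb <= 1 by rewrite ge_min lexx.
have ggb k : gb <= g k.
  rewrite /g; case: eqP => // /eqP Pk.
  have ak : 0 < a k by rewrite lt_def a0 andbT; apply/eqP => /(N0eq HNm); apply/eqP.
  rewrite le_min gb1 /=; apply: le_trans (_ : _ <= mu ^+ 2 / (L * (a 0 + 1))) _.
    by rewrite ge_min lexx orbT.
  apply: ler_wpM2l; first by rewrite exprn_ge0 // ltW.
  rewrite lef_pV2 ?posrE ?mulr_gt0 //.
  by apply: ler_wpM2l; [exact: ltW | have := ale k; lra].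
pose rho := 1 - gb / 2.
have rho0 : 0 <= rho by rewrite /rho; lra.
have rho1 : rho < 1 by rewrite /rho; lra.
have arho k : a k <= rho ^+ k * a 0.
  elim: k => [|k IH]; first by rewrite expr0 mul1r.
  have [_ h1 _] := step k.
  have h2 : gb * a k <= g k * a k by rewrite ler_wpM2r.
  apply: le_trans (_ : _ <= rho * a k) _; first by rewrite /rho; lra.
  by rewrite exprS -mulrA ler_wpM2l.
have stepm k : mu * Nn (x k.+1 - x k) <= 2 * (a k - a k.+1).
  have [_ h1 h2] := step k.
  have : mu * Nn (x k.+1 - x k) <= g k * a k by rewrite mulrC -ler_pdivlMr.
  lra.
have xc p j : mu * Nn (x (j + p)%N - x p) <= 2 * (a p - a (j + p)%N).
  elim: j => [|j IH]; first by rewrite add0n subrr N0 // mulr0 subrr mulr0.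
  rewrite addSn.
  have T := NT HNn (x (j + p).+1 - x (j + p)%N) (x (j + p)%N - x p).
  rewrite addrA subrK in T.
  have := stepm (j + p)%N.
  have := ler_wpM2l (ltW mu0) T.
  lra.
have [cn cn0 Hcn] := N_lower HNn.
have [cm cm0 Hcm] := N_lower HNm.
pose K := 2 * a 0 / (mu * cn) + a 0 / cm + 1.
have K0 : 0 < K.
  by rewrite /K ltr_wpDl // addr_ge0 // ?divr_ge0 ?mulr_ge0 // ltW // mulr_gt0.
have bx p j : `|x (j + p)%N - x p| <= K * rho ^+ p.
  have h1 := xc p j; have h2 := Hcn (x (j + p)%N - x p).
  have h3 := arho p; have h4 := a0 (j + p)%N.
  have h5 : mu * (cn * `|x (j + p)%N - x p|) <= mu * Nn (x (j + p)%N - x p).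
    by apply: ler_wpM2l => //; exact: ltW.
  have h6 : `|x (j + p)%N - x p| * (mu * cn) <= 2 * a 0 * rho ^+ p.
    have -> : `|x (j + p)%N - x p| * (mu * cn) = mu * (cn * `|x (j + p)%N - x p|) by ring.
    lra.
  rewrite -ler_pdivlMr ?mulr_gt0 // in h6.
  apply: le_trans h6 _; rewrite /K mulrAC.
  apply: ler_wpM2r; first exact: exprn_ge0.
  have : 0 <= a 0 / cm by rewrite divr_ge0 // ltW.
  lra.
have bP k : `|P (x k)| <= K * rho ^+ k.
  have h1 := Hcm (P (x k)); have h3 := arho k.
  have h5 : cm * `|P (x k)| <= rho ^+ k * a 0 by exact: le_trans h1 h3.
  rewrite mulrC -ler_pdivlMr // in h5.
  apply: le_trans h5 _; rewrite /K [rho ^+ k * _]mulrC mulrAC.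
  apply: ler_wpM2r; first exact: exprn_ge0.
  have : 0 <= 2 * a 0 / (mu * cn) by rewrite divr_ge0 ?mulr_ge0 // ltW // mulr_gt0.
  lra.
have small e : 0 < e -> \forall k \near \oo, K * rho ^+ k < e.
  move=> e0.
  have hr : `|rho| < 1 by rewrite ger0_norm.
  have hc := cvg_expr hr.
  have eK : 0 < e / K by rewrite divr_gt0.
  near=> k.
  have : `|0 - rho ^+ k| < e / K.
    by near: k; exact: (cvgr_dist_lt _ _ hc _ eK).
  by rewrite sub0r normrN ger0_norm ?exprn_ge0 // ltr_pdivlMr // mulrC.
have hcv : cvg (x @ \oo).
  apply/cauchy_cvgP; apply: cauchy_exP => eps eps0.
  have [N0 _ HN0] := small eps eps0.
  exists (x N0); exists N0 => // k /= hk.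
  rewrite -ball_normE /ball_ /= distrC -(subnK hk).
  exact: le_lt_trans (bx N0 (k - N0)%N) (HN0 N0 (leqnn _)).
exists (lim (x @ \oo)); split; first exact: hcv.
set xs := limn x.
have hPx : (P \o x) @ \oo --> P xs.
  apply: continuous_cvg; last exact: hcv.
  exact: differentiable_continuous (hP xs).1.
have hP0 : (P \o x) @ \oo --> (0 : 'cV[R]_m).
  apply/cvgrPdist_lt => e e0.
  have [N0 _ HN0] := small e e0.
  exists N0 => // k /= hk.
  rewrite sub0r normrN; exact: le_lt_trans (bP k) (HN0 k hk).
exact: (cvg_unique _ hPx hP0).
Unshelve. all: by end_near. Qed.
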